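(* No judgment aggregation rule that satisfies the equity property satisfies participation, and no judgment aggregation rule that satisfies the equity property satisfies antipodal strategyproofness (for Hamming-distance preferences extended to sets of judgments by any extension satisfying (R1) and (R2)).
   Context: An agenda is a finite nonempty list $\Phi=(\phi_1,\dots,\phi_m)$ of propositional formulas; a judgment is $J\in\{0,1\}^m$, $J(\phi_k)$ its $k$-th entry; the antipodal judgment $\overline{J}$ accepts exactly the issues rejected by $J$. $\mathcal{J}(\Phi)\subseteq\{0,1\}^m$ is the nonempty set of admissible judgments; the agenda may be chosen so that $\mathcal{J}(\Phi)$ is any prescribed nonempty set of vectors. For a finite set of agents $N$, a profile is $\mathbf{P}=(J_1,\dots,J_n)\in\mathcal{J}(\Phi)^n$; $\mathbf{P}_{-i}$ removes agent $i$, $(\mathbf{P}_{-i},J)$ replaces $i$'s judgment by $J$. A rule $F$ maps every profile (every finite group, every agenda) to a nonempty $F(\mathbf{P})\subseteq\mathcal{J}(\Phi)$. Hamming distance $H(J,J')=\sum_k|J(\phi_k)-J'(\phi_k)|$. Agent $i$ with truthful $J_i$: $J\succeq_i J'$ iff $H(J_i,J)\le H(J_i,J')$. Set preferences $\mathrel{\mathring{\succeq}}_i$ (strict part $\mathrel{\mathring{\succ}}_i$) satisfy (R1) $J\succeq_i J'$ iff $\{J\}\mathrel{\mathring{\succeq}}_i\{J'\}$, and (R2) $X\mathrel{\mathring{\succ}}_i Y$ implies there exist $J\in X$, $J'\in Y$ with $J\succ_i J'$ and $\{J,J'\}\not\subseteq X\cap Y$. Equity property: for all $\mathbf{P}$ and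 $J\in F(\mathbf{P})$ there are no $J'\in\mathcal{J}(\Phi)$, $i',j'\in N$ with $|H(J_i,J')-H(J_j,J')|<|H(J_{i'},J)-H(J_{j'},J)|$ for all $i,j\in N$. Participation: no $\mathbf{P}$, $i$ with $F(\mathbf{P}_{-i})\mathrel{\mathring{\succ}}_i F(\mathbf{P})$. Antipodal strategyproofness: no $\mathbf{P}$, $i$ with $F(\mathbf{P}_{-i},\overline{J_i})\mathrel{\mathring{\succ}}_i F(\mathbf{P})$. *)

(* Defs.v *)
From HB Require Import structures.
From mathcomp Require Import all_boot all_order.
From mathcomp Require Import finmap.

Set Implicit Arguments.
Unset Strict Implicit.
Unset Printing Implicit Defensive.

Local Open Scope fset_scope.

Inductive form : Type :=
  | FVar of nat
  | FNeg of form
  | FAnd of form & form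
  | FOr of form & form
  | FImp of form & form.

Fixpoint feval (v : nat -> bool) (f : form) : bool :=
  match f with
  | FVar n => v n
  | FNeg g => ~~ feval v g
  | FAnd g h => feval v g && feval v h
  | FOr g h => feval v g || feval v h
  | FImp g h => feval v g ==> feval v h
  end.

(* An agenda is a list Phi = (phi_1,...,phi_m) of formulas (required nonempty
   wherever used: 0 < size Phi).  A judgment is a 0/1 vector indexed by issues. *)
Definition judg (Phi : seq form) := {ffun 'I_(size Phi) -> bool}.

(* J is admissible iff the set {phi_k | J_k = 1} u {~phi_k | J_k = 0} is
   consistent, i.e. some valuation makes phi_k true exactly when J_k = 1. *)
Definition admissible (Phi : seq form) (J : judg Phi) : Prop :=
  exists v : nat -> bool,
    forall k : 'I_(size Phi), feval v (nth (FVar 0) Phi k) = J k.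

Definition antipodal (Phi : seq form) (J : judg Phi) : judg Phi :=
  [ffun k => ~~ J k].

Definition hamming (Phi : seq form) (J J' : judg Phi) : nat :=
  \sum_(k < size Phi) (J k != J' k).

Definition absdiff (m n : nat) : nat := (m - n) + (n - m).

(* A finite group of agents is a finite set N of agent names (naturals);
   a profile assigns a judgment to each agent of N. *)
Definition profile (Phi : seq form) (N : {fset nat}) := {ffun N -> judg Phi}.

Definition valid_profile (Phi : seq form) (N : {fset nat}) (P : profile Phi N) : Prop :=
  forall i : N, admissible (P i).

Definition remove_agent (Phi : seq form) (N : {fset nat}) (P : profile Phi N)
  (i : nat) : profile Phi (N `\ i) :=
  [ffun x => P (fincl (fsubsetDl N [fset i]) x)].

Definition replace_agent (Phi : seq form) (N : {fset nat}) (P : profile Phi N)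
  (i : N) (J : judg Phi) : profile Phi N :=
  [ffun x => if x == i then J else P x].

Definition rule := forall (Phi : seq form) (N : {fset nat}), profile Phi N -> {set judg Phi}.

Definition is_rule (F : rule) : Prop :=
  forall (Phi : seq form) (N : {fset nat}) (P : profile Phi N),
    0 < size Phi -> valid_profile P ->
    (exists J, J \in F Phi N P) /\ (forall J, J \in F Phi N P -> admissible J).

(* Set preferences: pref Phi i Ji is agent i's relation (X weakly preferred to Y)
   on sets of judgments, where Ji is the agent's truthful judgment. *)
Definition set_pref := forall (Phi : seq form), nat -> judg Phi ->
  {set judg Phi} -> {set judg Phi} -> Prop.

Definition strict_pref (pref : set_pref) (Phi : seq form) (i : nat) (Ji : judg Phi)
  (X Y : {set judg Phi}) : Prop :=
  pref Phi i Ji X Y /\ ~ pref Phi i Ji Y X.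

Definition adm_set (Phi : seq form) (X : {set judg Phi}) : Prop :=
  forall J, J \in X -> admissible J.

Definition R1 (pref : set_pref) : Prop :=
  forall (Phi : seq form) (i : nat) (Ji J J' : judg Phi),
    0 < size Phi -> admissible Ji -> admissible J -> admissible J' ->
    (hamming Ji J <= hamming Ji J' <-> pref Phi i Ji [set J] [set J']).

Definition R2 (pref : set_pref) : Prop :=
  forall (Phi : seq form) (i : nat) (Ji : judg Phi) (X Y : {set judg Phi}),
    0 < size Phi -> admissible Ji -> adm_set X -> adm_set Y ->
    strict_pref pref i Ji X Y ->
    exists J J', [/\ J \in X, J' \in Y, hamming Ji J < hamming Ji J'
                   & ~ (J \in X :&: Y /\ J' \in X :&: Y)].

Definition equity (F : rule) : Prop :=
  forall (Phi : seq form) (N : {fset nat}) (P : profile Phi N),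
    0 < size Phi -> valid_profile P ->
    forall J, J \in F Phi N P ->
      ~ (exists J' : judg Phi, admissible J' /\
           exists i' j' : N, forall i j : N,
             absdiff (hamming (P i) J') (hamming (P j) J')
               < absdiff (hamming (P i') J) (hamming (P j') J)).

Definition participation (pref : set_pref) (F : rule) : Prop :=
  forall (Phi : seq form) (N : {fset nat}) (P : profile Phi N) (i : N),
    0 < size Phi -> valid_profile P ->
    ~ strict_pref pref (val i) (P i)
        (F Phi (N `\ val i) (remove_agent P (val i))) (F Phi N P).

Definition antipodal_sp (pref : set_pref) (F : rule) : Prop :=
  forall (Phi : seq form) (N : {fset nat}) (P : profile Phi N) (i : N),
    0 < size Phi -> valid_profile P -> admissible (antipodal (P i)) ->
    ~ strict_pref pref (val i) (P i)
        (F Phi N (replace_agent P i (antipodal (P i)))) (F Phi N P).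

(* Main.v *)
Require Import Defs.
From mathcomp Require Import all_boot all_order finmap.

Set Implicit Arguments.
Unset Strict Implicit.
Unset Printing Implicit Defensive.
Local Open Scope fset_scope.

Definition better (Phi : seq form) (N : {fset nat}) (P : profile Phi N) (A J : judg Phi) :=
  exists i' j' : N, forall i j : N,
    absdiff (hamming (P i) A) (hamming (P j) A)
      < absdiff (hamming (P i') J) (hamming (P j') J).

Lemma uniq_out (F : rule) Phi N (P : profile Phi N) (A : judg Phi) :
  is_rule F -> equity F -> 0 < size Phi -> valid_profile P -> admissible A ->
  (forall J, admissible J -> J = A \/ better P A J) ->
  F Phi N P = [set A].
Proof.
move=> Hr He hs hv hA H.
case: (Hr _ _ P hs hv) => [[J0 HJ0] Had].
have all: forall J, J \in F Phi N P -> J = A.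
  move=> J HJ; case: (H J (Had J HJ)) => // Hb; exfalso.
  by apply: (He _ _ P hs hv J HJ); exists A; split.
apply/setP => J; rewrite in_set1; apply/idP/eqP => [/all // | ->].
by have := all _ HJ0 => <-.
Qed.

Lemma sp (pref : set_pref) Phi i (Ji A B : judg Phi) :
  R1 pref -> 0 < size Phi -> admissible Ji -> admissible A -> admissible B ->
  hamming Ji B < hamming Ji A -> strict_pref pref i Ji [set B] [set A].
Proof.
move=> R hs hJ hA hB lt; split.
  by apply/(R _ _ _ _ _ hs hJ hB hA); apply: ltnW.
move/(R _ _ _ _ _ hs hJ hA hB); by rewrite leqNgt lt.
Qed.

Definition x := FVar 0.
Definition y := FVar 1.
Definition mkJ Phi (s : seq bool) : judg Phi := [ffun k : 'I_(size Phi) => nth false s k].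


Definition Phi1 : seq form := [:: FOr x y; FAnd (FNeg x) y; FAnd (FNeg x) y; x; x].
Definition a1 := mkJ Phi1 [:: false;false;false;false;false].
Definition b1 := mkJ Phi1 [:: true;true;true;false;false].
Definition c1 := mkJ Phi1 [:: true;false;false;true;true].

Ltac ham := unfold absdiff, hamming; unfold a1, b1, c1, mkJ; rewrite !big_ord_recr !big_ord0 /= !ffunE /=.

Lemma adm1 J : admissible J -> J = a1 \/ J = b1 \/ J = c1.
Proof.
case=> v H.
have -> : J = [ffun k : 'I_(size Phi1) => feval v (nth (FVar 0) Phi1 k)] by apply/ffunP=> k; rewrite ffunE H.
case Hx: (v 0); case Hy: (v 1); [right;right|right;right|right;left|left];
  apply/ffunP => k; rewrite !ffunE; case: k => [[|[|[|[|[|//]]]]] Hk] /=;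
  by rewrite ?Hx ?Hy.
Qed.

Lemma adm_a1 : admissible a1.
Proof. exists (fun _ => false) => k; rewrite ffunE; by case: k => [[|[|[|[|[|//]]]]] Hk]. Qed.
Lemma adm_b1 : admissible b1.
Proof. exists (fun n => n == 1) => k; rewrite ffunE; by case: k => [[|[|[|[|[|//]]]]] Hk]. Qed.
Lemma adm_c1 : admissible c1.
Proof. exists (fun n => n == 0) => k; rewrite ffunE; by case: k => [[|[|[|[|[|//]]]]] Hk]. Qed.

Definition N3 : {fset nat} := [fset 0; 1; 2].
Lemma m0 : 0 \in N3. Proof. by rewrite !inE. Qed.
Lemma m1 : 1 \in N3. Proof. by rewrite !inE. Qed.
Lemma m2 : 2 \in N3. Proof. by rewrite !inE. Qed.
Definition g0 : N3 := [` m0].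
Definition g1 : N3 := [` m1].
Definition g2 : N3 := [` m2].

Lemma agentP (z : N3) : val z = 0 \/ val z = 1 \/ val z = 2.
Proof.
case: z => v /=; rewrite !inE => /orP[/orP[]|] /eqP ->; auto.
Qed.

Definition f1 (n : nat) := if n == 0 then a1 else if n == 1 then b1 else c1.
Definition P1 : profile Phi1 N3 := [ffun z => f1 (val z)].

Lemma valid1 : valid_profile P1.
Proof.
move=> z; rewrite ffunE /f1.
case: ifP => _; [exact: adm_a1|case: ifP => _; [exact: adm_b1|exact: adm_c1]].
Qed.

Lemma F1 (F : rule) : is_rule F -> equity F -> F Phi1 N3 P1 = [set a1].
Proof.
move=> Hr He; apply: uniq_out => //; [exact: valid1|exact: adm_a1|].
move=> J /adm1 [->|[->|->]]; [by left|right|right].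
- exists g1, g2 => i j; rewrite !ffunE.
  case: (agentP i) => [->|[->|->]]; case: (agentP j) => [->|[->|->]]; rewrite /f1 /=; by ham.
- exists g2, g1 => i j; rewrite !ffunE.
  case: (agentP i) => [->|[->|->]]; case: (agentP j) => [->|[->|->]]; rewrite /f1 /=; by ham.
Qed.

Lemma n0 : 0 \in N3 `\ 2. Proof. by rewrite !inE. Qed.
Lemma n1 : 1 \in N3 `\ 2. Proof. by rewrite !inE. Qed.
Definition h0 : N3 `\ 2 := [` n0].
Definition h1 : N3 `\ 2 := [` n1].

Lemma agentP2 (z : N3 `\ 2) : val z = 0 \/ val z = 1.
Proof.
case: z => v /=; rewrite !inE => /andP[/eqP ne] /orP[/orP[]|] /eqP e; subst; auto.
by case: ne.
Qed.

Lemma F2 (F : rule) : is_rule F -> equity F ->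
  F Phi1 (N3 `\ val g2) (remove_agent P1 (val g2)) = [set c1].
Proof.
move=> Hr He; apply: uniq_out => //; [|exact: adm_c1|].
  by move=> z; rewrite ffunE; apply: valid1.
move=> J /adm1 [->|[->|->]]; [right|right|by left].
- exists h0, h1 => i j; rewrite !ffunE /=.
  case: (agentP2 i) => [->|->]; case: (agentP2 j) => [->|->]; rewrite /f1 /=; by ham.
- exists h0, h1 => i j; rewrite !ffunE /=.
  case: (agentP2 i) => [->|->]; case: (agentP2 j) => [->|->]; rewrite /f1 /=; by ham.
Qed.

Lemma not_part (pref : set_pref) (F : rule) :
  R1 pref -> is_rule F -> equity F -> ~ participation pref F.
Proof.
move=> R Hr He Hp; apply: (Hp Phi1 N3 P1 g2 isT valid1).
rewrite F1 // F2 //.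
have e : P1 g2 = c1 by rewrite ffunE.
rewrite e; apply: sp => //; [exact: adm_c1|exact: adm_a1|exact: adm_c1|by ham].
Qed.

Definition Phi2 : seq form :=
  [:: y; y; y; FAnd (FNeg x) y; FAnd (FNeg x) y; FAnd (FOr x y) (FNeg (FAnd x y))].
Definition p2 := mkJ Phi2 [:: false;false;false;false;false;false].
Definition pb2 := mkJ Phi2 [:: true;true;true;true;true;true].
Definition q2 := mkJ Phi2 [:: false;false;false;false;false;true].
Definition r2 := mkJ Phi2 [:: true;true;true;false;false;false].

Ltac ham2 := unfold absdiff, hamming; unfold p2, pb2, q2, r2, mkJ;
  rewrite !big_ord_recr !big_ord0 /= !ffunE /=.

Lemma adm2 J : admissible J -> [\/ J = p2, J = pb2, J = q2 | J = r2].
Proof.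
case=> v H.
have -> : J = [ffun k : 'I_(size Phi2) => feval v (nth (FVar 0) Phi2 k)]
  by apply/ffunP=> k; rewrite ffunE H.
case Hx: (v 0); case Hy: (v 1); [apply: Or44|apply: Or43|apply: Or42|apply: Or41];
  apply/ffunP => k; rewrite !ffunE; case: k => [[|[|[|[|[|[|//]]]]]] Hk] /=;
  by rewrite ?Hx ?Hy.
Qed.

Lemma adm_p2 : admissible p2.
Proof. exists (fun _ => false) => k; rewrite ffunE; by case: k => [[|[|[|[|[|[|//]]]]]] Hk]. Qed.
Lemma adm_pb2 : admissible pb2.
Proof. exists (fun n => n == 1) => k; rewrite ffunE; by case: k => [[|[|[|[|[|[|//]]]]]] Hk]. Qed.
Lemma adm_q2 : admissible q2.
Proof. exists (fun n => n == 0) => k; rewrite ffunE; by case: k => [[|[|[|[|[|[|//]]]]]] Hk]. Qed.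
Lemma adm_r2 : admissible r2.
Proof. exists (fun n => true) => k; rewrite ffunE; by case: k => [[|[|[|[|[|[|//]]]]]] Hk]. Qed.

Definition f2 (n : nat) := if n == 0 then p2 else if n == 1 then pb2 else r2.
Definition P2 : profile Phi2 N3 := [ffun z => f2 (val z)].
Definition f3 (n : nat) := if n == 0 then pb2 else f2 n.

Lemma valid2 : valid_profile P2.
Proof.
move=> z; rewrite ffunE /f2.
case: ifP => _; [exact: adm_p2|case: ifP => _; [exact: adm_pb2|exact: adm_r2]].
Qed.

Lemma anti2 : antipodal (P2 g0) = pb2.
Proof.
apply/ffunP => k; rewrite !ffunE /f2 /=; by case: k => [[|[|[|[|[|[|//]]]]]] Hk].
Qed.

Lemma repl2 z : replace_agent P2 g0 pb2 z = f3 (val z).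
Proof. by rewrite !ffunE -val_eqE /f3 /=; case: ifP. Qed.

Lemma valid3 : valid_profile (replace_agent P2 g0 pb2).
Proof.
move=> z; rewrite repl2 /f3 /f2.
case: ifP => _; [exact: adm_pb2|case: ifP => _; [exact: adm_p2|case: ifP => _; [exact: adm_pb2|exact: adm_r2]]].
Qed.

Lemma F3 (F : rule) : is_rule F -> equity F -> F Phi2 N3 P2 = [set r2].
Proof.
move=> Hr He; apply: uniq_out => //; [exact: valid2|exact: adm_r2|].
move=> J /adm2 [->|->|->|->]; [right|right|right|by left].
- exists g0, g1 => i j; rewrite !ffunE.
  case: (agentP i) => [->|[->|->]]; case: (agentP j) => [->|[->|->]]; rewrite /f2 /=; by ham2.
- exists g0, g1 => i j; rewrite !ffunE.
  case: (agentP i) => [->|[->|->]]; case: (agentP j) => [->|[->|->]]; rewrite /f2 /=; by ham2.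
- exists g0, g1 => i j; rewrite !ffunE.
  case: (agentP i) => [->|[->|->]]; case: (agentP j) => [->|[->|->]]; rewrite /f2 /=; by ham2.
Qed.

Lemma F4 (F : rule) : is_rule F -> equity F ->
  F Phi2 N3 (replace_agent P2 g0 pb2) = [set q2].
Proof.
move=> Hr He; apply: uniq_out => //; [exact: valid3|exact: adm_q2|].
move=> J /adm2 [->|->|->|->]; [right|right|by left|right].
- exists g0, g2 => i j; rewrite !repl2.
  case: (agentP i) => [->|[->|->]]; case: (agentP j) => [->|[->|->]]; rewrite /f3 /f2 /=; by ham2.
- exists g0, g2 => i j; rewrite !repl2.
  case: (agentP i) => [->|[->|->]]; case: (agentP j) => [->|[->|->]]; rewrite /f3 /f2 /=; by ham2.
- exists g0, g2 => i j; rewrite !repl2.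
  case: (agentP i) => [->|[->|->]]; case: (agentP j) => [->|[->|->]]; rewrite /f3 /f2 /=; by ham2.
Qed.

Lemma not_anti (pref : set_pref) (F : rule) :
  R1 pref -> is_rule F -> equity F -> ~ antipodal_sp pref F.
Proof.
move=> R Hr He Hp.
have hadm : admissible (antipodal (P2 g0)) by rewrite anti2; exact: adm_pb2.
apply: (Hp Phi2 N3 P2 g0 isT valid2 hadm).
rewrite anti2 F3 // F4 //.
have e : P2 g0 = p2 by rewrite ffunE.
rewrite e; apply: sp => //; [exact: adm_p2|exact: adm_r2|exact: adm_q2|by ham2].
Qed.

Theorem mainTheorem9 (pref : set_pref) (F : rule) :
  R1 pref -> R2 pref -> is_rule F -> equity F ->
  ~ participation pref F /\ ~ antipodal_sp pref F.
Proof.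
move=> R _ Hr He; split; [exact: not_part | exact: not_anti].
Qed.
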